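(* Assume $k\ge 2\cdot10^8$, the stream is in random order, and there exists a dense set $D\subseteq V$. Then with probability at least $0.01$ the output $S$ of Algorithm 1 satisfies $f(S)\ge0.50025\cdot\mathrm{OPT}$.
   Context: $V$ is a finite ground set with $|V|=n$; $f:2^V\to\mathbb{R}_{\ge0}$ is monotone, submodular and normalized ($f(\emptyset)=0$); $f(X\mid Y)=f(X\cup Y)-f(Y)$ and $f(e\mid Y)=f(\{e\}\mid Y)$. $k$ is a positive integer with $k\le n$, $\mathrm{OPT}=\max\{f(S):S\subseteq V,|S|\le k\}$. A stream is an ordering $e_1,\dots,e_n$ of $V$; ''random order'' means a uniformly random permutation. A set $D$ is dense if $|D|\le\eta k$ and $f(D)\ge\frac{1-\gamma}{2}\mathrm{OPT}$, where $\gamma=10^{-2}$, $\eta=5\cdot10^{-5}$. Algorithm 1 (knows $\mathrm{OPT}$): start with $S=\emptyset$; for $i=1,\dots,n$, add $e_i$ to $S$ if $|S|<k$ and either ($i\le 0.9n$ and $f(e_i\mid S)\ge\frac{100}{k}\mathrm{OPT}$) or ($i>0.9n$ and $f(e_i\mid S)\ge\frac{1}{10k}\mathrm{OPT}$); return $S$. *)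

(* Defs.v *)
From HB Require Import structures.
From mathcomp Require Import all_boot all_order all_fingroup all_algebra.
Set Implicit Arguments. Unset Strict Implicit. Unset Printing Implicit Defensive.
Import Order.TTheory GRing.Theory Num.Theory.
Local Open Scope ring_scope.

Section Defs.
Variables (R : realFieldType) (V : finType).

Definition fcond (f : {set V} -> R) (X Y : {set V}) : R := f (X :|: Y) - f Y.
Definition fmarg (f : {set V} -> R) (e : V) (Y : {set V}) : R := fcond f [set e] Y.

Definition monotone_set_fun (f : {set V} -> R) : Prop :=
  forall A B : {set V}, A \subset B -> f A <= f B.
Definition submodular (f : {set V} -> R) : Prop :=
  forall A B : {set V}, f (A :|: B) + f (A :&: B) <= f A + f B.
Definition normalized (f : {set V} -> R) : Prop := f set0 = 0.
Definition nonneg_set_fun (f : {set V} -> R) : Prop := forall A, 0 <= f A.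

(* OPT = max { f S : |S| <= k }  (the empty set is feasible and f >= 0) *)
Definition OPT (f : {set V} -> R) (k : nat) : R :=
  \big[Num.max/0]_(S : {set V} | (#|S| <= k)%N) f S.

Definition gamma : R := 1 / 100.
Definition eta : R := 5 / 10 ^+ 5.

Definition dense (f : {set V} -> R) (k : nat) (D : {set V}) : Prop :=
  (#|D|%:R <= eta * k%:R) /\ ((1 - gamma) / 2 * OPT f k <= f D).

(* One step of Algorithm 1 on element e = e_i (i is 1-based), n = |V|. *)
Definition alg1_step (f : {set V} -> R) (k n : nat) (opt : R)
    (S : {set V}) (i : nat) (e : V) : {set V} :=
  if (#|S| < k)%N &&
     (if (i%:R : R) <= 9 / 10 * n%:R then 100 / k%:R * opt <= fmarg f e S
      else opt / (10 * k%:R) <= fmarg f e S)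
  then e |: S else S.

Fixpoint alg1_run (f : {set V} -> R) (k n : nat) (opt : R)
    (i : nat) (S : {set V}) (s : seq V) : {set V} :=
  match s with
  | [::] => S
  | e :: s' => alg1_run f k n opt i.+1 (alg1_step f k n opt S i e) s'
  end.

(* Algorithm 1 (knowing OPT) on stream s = e_1, ..., e_n. *)
Definition algorithm1 (f : {set V} -> R) (k : nat) (s : seq V) : {set V} :=
  alg1_run f k #|V| (OPT f k) 1 set0 s.

(* The stream induced by a permutation sigma of V: a uniformly random
   sigma yields a uniformly random ordering of V. *)
Definition stream_of (sigma : {perm V}) : seq V := map sigma (enum V).

End Defs.

(* Main.v *)
Require Import Defs.
From HB Require Import structures.
From mathcomp Require Import all_boot all_order all_fingroup all_algebra.
From mathcomp Require Import ring lra zify.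
Import Order.TTheory GRing.Theory Num.Theory.
Local Open Scope ring_scope.
Set Implicit Arguments. Unset Strict Implicit.

Section Sub.
Variables (R : realFieldType) (V : finType) (f : {set V} -> R).
Hypothesis fmono : monotone_set_fun f.
Hypothesis fsub : submodular f.

Lemma fmarg_ge0 e (S : {set V}) : 0 <= fmarg f e S.
Proof. rewrite /fmarg /fcond subr_ge0; apply: fmono; exact: subsetUr. Qed.

Lemma fmarg_in e (S : {set V}) : e \in S -> fmarg f e S = 0.
Proof.
move=> eS; rewrite /fmarg /fcond.
have -> : [set e] :|: S = S by apply/setUidPr; rewrite sub1set.
by rewrite subrr.
Qed.

Lemma fmarg_DR e (A B : {set V}) : A \subset B -> fmarg f e B <= fmarg f e A.
Proof.
move=> AB; case eB: (e \in B); first by rewrite fmarg_in // fmarg_ge0.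
have := fsub ([set e] :|: A) B.
have -> : ([set e] :|: A) :|: B = [set e] :|: B by rewrite -setUA (setUidPr AB).
have -> : ([set e] :|: A) :&: B = A.
  rewrite setIUl (setIidPl AB); apply/setUidPr; apply/subsetP=> x; rewrite !inE.
  by case/andP=> /eqP -> ; rewrite eB.
rewrite /fmarg /fcond => h; lra.
Qed.

Lemma union_bound (S X : {set V}) :
  f (S :|: X) <= f S + \sum_(e in X) fmarg f e S.
Proof.
have [n] := ubnP #|X|; elim: n X => // n IH X.
case: (set_0Vmem X) => [->|[x xX]] cX; first by rewrite setU0 big_set0 addr0.
have -> : X = x |: (X :\ x) by rewrite setD1K.
have xn : x \notin X :\ x by rewrite !inE eqxx.
rewrite big_setU1 //=.
have IH' := IH (X :\ x).
have : (#|X :\ x| < n)%N by move: cX; rewrite (cardsD1 x X) xX.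
move=> /IH' {}IH'.
have := fmarg_DR x (subsetUl S (X :\ x)).
rewrite {1}/fmarg /fcond setUA [_ :|: S]setUC -setUA.
have := fmarg_ge0 x S. lra.
Qed.

Lemma union_bound_c (S X : {set V}) c :
  (forall e, e \in X -> fmarg f e S <= c) -> f (S :|: X) <= f S + #|X|%:R * c.
Proof.
move=> h; apply: le_trans (union_bound S X) _; rewrite lerD2l.
rewrite -sum1_card natr_sum mulr_suml; apply: ler_sum => e eX; rewrite mul1r; exact: h.
Qed.

Variables (k n : nat) (opt : R).

Definition thr (i : nat) : R :=
  if (i%:R : R) <= 9 / 10 * n%:R then 100 / k%:R * opt else opt / (10 * k%:R).

Lemma step_eq (S : {set V}) i e : alg1_step f k n opt S i e =
  if (#|S| < k)%N && (thr i <= fmarg f e S) then e |: S else S.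
Proof. by rewrite /alg1_step /thr; case: (_ <= _ * _). Qed.

Notation run := (alg1_run f k n opt).

Lemma run_cat i (S : {set V}) s1 s2 : run i S (s1 ++ s2) = run (i + size s1) (run i S s1) s2.
Proof. by elim: s1 i S => [|e s1 IH] i S /=; rewrite ?addn0 // IH addSnnS. Qed.

Lemma step_sub (S : {set V}) i e : S \subset alg1_step f k n opt S i e.
Proof. rewrite step_eq; case: ifP => _ //; exact: subsetUr. Qed.

Lemma run_sub i (S : {set V}) s : S \subset run i S s.
Proof.
elim: s i S => [|e s IH] i S /=; first exact: subxx.
exact: subset_trans (step_sub S i e) (IH _ _).
Qed.

Lemma run_card i (S : {set V}) s : (#|S| <= k)%N -> (#|run i S s| <= k)%N.
Proof.
elim: s i S => [|e s IH] i S //= hS; apply: IH; rewrite step_eq.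
case: ifP => [/andP[hk _]|//]; rewrite cardsU1; case: (e \in S) => /=; lia.
Qed.

Lemma run_val t i (S : {set V}) s : (forall j, (j < size s)%N -> t <= thr (i + j)) ->
  f S + t * (#|run i S s|%:R - #|S|%:R) <= f (run i S s).
Proof.
elim: s i S => [|e s IH] i S /= ht; first by rewrite subrr mulr0 addr0.
have h0 := ht 0%N isT; rewrite addn0 in h0.
have hs : forall j, (j < size s)%N -> t <= thr (i.+1 + j).
  by move=> j hj; rewrite addSnnS; apply: ht.
have := IH i.+1 (alg1_step f k n opt S i e) hs.
rewrite step_eq; case: ifP => [/andP[_ hm]|_]; last lra.
case eS: (e \in S).
  have -> : e |: S = S by apply/setUidPr; rewrite sub1set.
  lra.
rewrite cardsU1 eS natrD /= => h.
move: hm; rewrite /fmarg /fcond => hm. lra.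
Qed.

Lemma run_cover i (S : {set V}) s j e0 : (j < size s)%N ->
  nth e0 s j \in run i S s \/
  exists St : {set V}, St \subset run i S s /\ ((k <= #|St|)%N \/ fmarg f (nth e0 s j) St < thr (i + j)).
Proof.
elim: s i S j => [|e s IH] i S j //= hj.
case: j hj => [|j] hj /=.
  rewrite addn0.
  move: (run_sub i.+1 (alg1_step f k n opt S i e) s).
  rewrite step_eq; case: ifP => [_ sub|].
    by left; apply: (subsetP sub); rewrite !inE eqxx.
  move=> /negbT; rewrite negb_and -leqNgt -ltNge => h sub; right; exists S; split=> //.
  exact/orP.
have := IH i.+1 (alg1_step f k n opt S i e) j hj.
by rewrite addSnnS.
Qed.

Lemma cover_final i (S : {set V}) s j e0 : 0 <= thr (i + j) -> (j < size s)%N ->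
  (#|run i S s| < k)%N -> fmarg f (nth e0 s j) (run i S s) <= thr (i + j).
Proof.
move=> h0 hj hk; case: (run_cover i S e0 hj) => [hin|[St [sub [hc|hm]]]].
- by rewrite fmarg_in.
- have := subset_leq_card sub; lia.
- apply: le_trans (fmarg_DR _ sub) _; exact: ltW.
Qed.
End Sub.
Lemma count_index (T : eqType) (s : seq T) m : uniq s ->
  count (fun y => (index y s < m)%N) s = minn m (size s).
Proof.
elim: s m => [|x s IH] m /=; first by rewrite minn0.
case/andP=> xs us.
rewrite eqxx /=.
case: m => [|m]; first by rewrite /= add0n min0n; apply/eqP; rewrite -leqn0 leqNgt -has_count; apply/hasP=> -[y ys /=]; case: ifP.
rewrite (@eq_in_count _ _ (fun y => (index y s < m)%N)); last first.
  move=> y ys /=; case: ifP => [/eqP xy|//]; by rewrite xy ys in xs.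
rewrite IH //; lia.
Qed.

Lemma card_index (V : finType) m : #|[set y : V | (index y (enum V) < m)%N]| = minn m #|V|.
Proof.
rewrite cardT -(@count_index _ (enum V) m (enum_uniq V)) -sum1_count -sum1_card.
rewrite big_enum_cond /=.
apply: eq_bigl => y; by rewrite inE.
Qed.

Section Count.
Variables (R : realFieldType) (V : finType) (N1 : nat).

Definition Pset (s : {perm V}) : {set V} := [set x | (index ((s^-1)%g x) (enum V) < N1)%N].

Lemma Pset_mul s t x : (x \in Pset (s * t)%g) = ((t^-1)%g x \in Pset s).
Proof. by rewrite !inE invMg permM. Qed.

Lemma card_Pset s : (N1 <= #|V|)%N -> #|Pset s| = N1.
Proof.
move=> hN.
have -> : Pset s = [set s y | y in [set y : V | (index y (enum V) < N1)%N]].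
  apply/setP=> x; rewrite inE; apply/idP/imsetP.
    by move=> h; exists ((s^-1)%g x); rewrite ?inE ?permKV.
  by case=> y; rewrite inE => hy ->; rewrite permK.
rewrite card_imset; last exact: perm_inj.
by rewrite card_index; apply/minn_idPl.
Qed.

Lemma count_swap (D T : {set V}) x y : x \notin D -> y \notin D ->
  \sum_(s | (D :&: Pset s == T) && (x \notin Pset s)) (1 : R) =
  \sum_(s | (D :&: Pset s == T) && (y \notin Pset s)) 1.
Proof.
move=> xD yD.
rewrite (reindex_inj (@mulIg _ (tperm x y))) /=.
apply: eq_bigl => s.
have -> : D :&: Pset (s * tperm x y)%g = D :&: Pset s.
  apply/setP=> z; rewrite !in_setI Pset_mul tpermV.
  case zD: (z \in D) => //=.
  rewrite tpermD //; apply/eqP=> e; subst; by rewrite zD in xD yD.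
by rewrite Pset_mul tpermV tpermL.
Qed.

Lemma count_out (D T : {set V}) x : (N1 <= #|V|)%N -> x \notin D ->
  #|~: D|%:R * \sum_(s | (D :&: Pset s == T) && (x \notin Pset s)) (1 : R) =
  (#|~: D|%:R - N1%:R + #|T|%:R) * \sum_(s | D :&: Pset s == T) 1.
Proof.
move=> hN xD.
have E1 : \sum_(y in ~: D) \sum_(s | (D :&: Pset s == T) && (y \notin Pset s)) (1 : R) =
          \sum_(s | D :&: Pset s == T) (#|~: D :\: Pset s|%:R : R).
  symmetry.
  transitivity (\sum_(s | D :&: Pset s == T) \sum_(y in ~: D :\: Pset s) (1:R)).
    by apply eq_bigr => s _; rewrite -sum1_card natr_sum.
  rewrite (exchange_big_dep (mem (~: D))) /=; last by move=> s y _; rewrite !inE => /andP[].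
  apply: eq_bigr => y yD; apply: eq_bigl => s.
  rewrite in_setD in_setC; move: yD; rewrite inE => ->; by rewrite andbT.
have E2 : \sum_(y in ~: D) \sum_(s | (D :&: Pset s == T) && (y \notin Pset s)) (1 : R) =
          #|~: D|%:R * \sum_(s | (D :&: Pset s == T) && (x \notin Pset s)) 1.
  rewrite (eq_bigr (fun _ => \sum_(s | (D :&: Pset s == T) && (x \notin Pset s)) (1 : R))).
    by rewrite sumr_const mulr_natl.
  by move=> y; rewrite inE => yD; apply: count_swap.
rewrite -E2 E1 mulr_sumr; apply: eq_bigr => s /eqP As.
rewrite mulr1.
have h1 := cardsID (Pset s) (~: D).
have h2 := cardsID D (Pset s).
have e1 : ~: D :&: Pset s = Pset s :\: D by rewrite setDE setIC.
rewrite e1 card_Pset // (setIC _ D) As in h1 h2.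
have : (#|Pset s :\: D| + #|~: D :\: Pset s|)%:R = #|~: D|%:R :> R by rewrite h1.
have : (#|T| + #|Pset s :\: D|)%:R = N1%:R :> R by rewrite h2.
rewrite !natrD. lra.
Qed.

Lemma count_in (D T : {set V}) x : (N1 <= #|V|)%N -> x \notin D ->
  #|~: D|%:R * \sum_(s | (D :&: Pset s == T) && (x \in Pset s)) (1 : R) =
  (N1%:R - #|T|%:R) * \sum_(s | D :&: Pset s == T) 1.
Proof.
move=> hN xD; have h := count_out T hN xD.
have hs : \sum_(s | D :&: Pset s == T) (1:R) = \sum_(s | (D :&: Pset s == T) && (x \in Pset s)) 1
   + \sum_(s | (D :&: Pset s == T) && (x \notin Pset s)) 1 by rewrite (bigID (fun s => x \in Pset s)).
rewrite hs in h *.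
set a := \sum_(s | _ && (x \in _)) _ in h *.
set b := \sum_(s | _ && (x \notin _)) _ in h *.
move: h; set Z := (#|~: D|%:R : R); set M := (N1%:R : R); set t := (#|T|%:R : R).
move=> h.
have -> : Z * a = Z * (a + b) - Z * b by ring.
rewrite h; ring.
Qed.

Lemma sum_if (I : finType) (A B : pred I) (c : R) :
  \sum_(i | A i) (if B i then c else 0) = c * \sum_(i | A i && B i) 1.
Proof. by rewrite mulr_sumr -big_mkcondr; apply: eq_bigr => i _; rewrite mulr1. Qed.

Lemma sampling (I : finType) (A : pred I) (Rs : I -> {set V}) (g : {set V} -> R) (q : R) (Q : {set V}) :
  g set0 = 0 ->
  (forall x (X Y : {set V}), X \subset Y -> g (x |: Y) - g Y <= g (x |: X) - g X) ->
  (forall x, x \in Q -> \sum_(i | A i && (x \in Rs i)) (1:R) = q * \sum_(i | A i) 1) ->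
  q * (\sum_(i | A i) 1) * g Q <= \sum_(i | A i) g (Q :&: Rs i).
Proof.
move=> g0 DR.
have [n] := ubnP #|Q|; elim: n Q => // n IH Q.
case: (set_0Vmem Q) => [->|[x xQ]] cQ hq.
  rewrite g0 mulr0 (eq_bigr (fun _ => 0)); first by rewrite big1.
  by move=> i _; rewrite set0I g0.
set Q' := Q :\ x.
have cQ' : (#|Q'| < n)%N by move: cQ; rewrite (cardsD1 x Q) xQ.
have IH' := IH Q' cQ' (fun y yQ => hq y (subsetP (subsetDl Q [set x]) y yQ)).
have eQ : Q = x |: Q' by rewrite setD1K.
have pw : forall i, g (Q' :&: Rs i) + (if x \in Rs i then g Q - g Q' else 0) <= g (Q :&: Rs i).
  move=> i; case xR: (x \in Rs i); last first.
    have -> : Q :&: Rs i = Q' :&: Rs i.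
      apply/setP=> z; rewrite !inE; case: (z =P x) => [->|]; by rewrite ?xR ?andbF.
    by rewrite addr0.
  have -> : Q :&: Rs i = x |: (Q' :&: Rs i).
    apply/setP=> z; rewrite !inE; case: (z =P x) => [->|//]; by rewrite xR xQ.
  have := DR x (Q' :&: Rs i) Q' (subsetIl _ _); rewrite -eQ; lra.
have : \sum_(i | A i) (g (Q' :&: Rs i) + (if x \in Rs i then g Q - g Q' else 0)) <= \sum_(i | A i) g (Q :&: Rs i).
  by apply: ler_sum => i _; exact: pw.
rewrite big_split /= sum_if (hq x xQ).
move: IH'; set S := \sum_(i | A i) (1:R); set a := \sum_(i | A i) g (Q' :&: Rs i).
move=> h1 h2; nra.
Qed.

Lemma rev_markov (I : finType) (A : pred I) (h : I -> R) (M c : R) :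
  (forall i, A i -> h i <= M) ->
  \sum_(i | A i) h i - c * \sum_(i | A i) 1 <= (M - c) * \sum_(i | A i && (c <= h i)) 1.
Proof.
move=> hM; rewrite -sum_if mulr_sumr -sumrB; apply: ler_sum => i Ai.
have := hM i Ai; case: ifP => hc; lra.
Qed.

Lemma markov (I : finType) (A B : pred I) (h : I -> R) (t : R) :
  (forall i, A i -> 0 <= h i) -> (forall i, A i -> B i -> t <= h i) ->
  t * \sum_(i | A i && B i) 1 <= \sum_(i | A i) h i.
Proof.
move=> h0 ht; rewrite -sum_if; apply: ler_sum => i Ai.
have := h0 i Ai; case: ifP => Bi // _; exact: ht.
Qed.
End Count.

Section Main.
Variables (R : realFieldType) (V : finType) (f : {set V} -> R) (k : nat).
Hypotheses (fnn : nonneg_set_fun f) (fmono : monotone_set_fun f)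
  (fsub : submodular f) (f0 : normalized f) (k0 : (0 < k)%N) (kn : (k <= #|V|)%N).

Lemma OPT_ge (S : {set V}) : (#|S| <= k)%N -> f S <= OPT f k.
Proof. move=> hS; rewrite /OPT; exact: (le_bigmax_cond _ _ hS). Qed.

Lemma OPT_ge0 : 0 <= OPT f k.
Proof. have := OPT_ge (S := set0); rewrite cards0 f0; by apply. Qed.

Lemma OPT_attained : exists O : {set V}, (#|O| <= k)%N /\ f O = OPT f k.
Proof.
have h0 : (#|(set0 : {set V})| <= k)%N by rewrite cards0.
have := @bigmax_eq_arg _ _ {set V} 0 set0 (fun S => (#|S| <= k)%N) f h0 (fun S _ => fnn S).
case: arg_maxP => // O hO _ e; exists O; split => //; by rewrite /OPT e.
Qed.

Definition N1 := ((9 * #|V|) %/ 10)%N.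

Lemma N1_iff i : ((i%:R : R) <= 9 / 10 * #|V|%:R) = (i <= N1)%N.
Proof.
rewrite /N1 leq_divRL //; apply/idP/idP => h.
  have : ((i * 10)%:R : R) <= (9 * #|V|)%:R by rewrite !natrM; lra.
  by rewrite ler_nat.
have : ((i * 10)%:R : R) <= (9 * #|V|)%:R by rewrite ler_nat.
rewrite !natrM => h'; lra.
Qed.

Lemma N1_bounds : (10 * N1 <= 9 * #|V| /\ 9 * #|V| < 10 * N1 + 10)%N.
Proof.
split; first by rewrite mulnC leq_trunc_div.
have := @ltn_ceil (9 * #|V|) 10 isT; rewrite /N1; lia.
Qed.

Lemma N1_le : (N1 <= #|V|)%N.
Proof. have [h _] := N1_bounds; lia. Qed.

Notation o := (OPT f k).
Notation tau1 := (100 / k%:R * o).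
Notation tau2 := (o / (10 * k%:R)).
Notation thrf := (thr k #|V| o).

Lemma thr1 i : (i <= N1)%N -> thrf i = tau1.
Proof. by rewrite /thr N1_iff => ->. Qed.

Lemma thr2 i : (N1 < i)%N -> thrf i = tau2.
Proof. by move=> h; rewrite /thr N1_iff leqNgt h. Qed.

Lemma tau_facts : 0 < k%:R :> R /\ 0 <= tau2 /\ tau2 <= tau1.
Proof.
have kp : 0 < k%:R :> R by rewrite ltr0n.
have o0 := OPT_ge0.
split => //; split; first by apply: divr_ge0 => //; lra.
have e : 100 / k%:R * o - o / (10 * k%:R) = (o / k%:R) * (999/10).
  by field; apply/eqP; lra.
have : 0 <= o / k%:R by apply: divr_ge0 => //; lra.
lra.
Qed.

Lemma thr_bounds i : tau2 <= thrf i /\ thrf i <= tau1.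
Proof.
have [_ [h1 h2]] := tau_facts.
case: (leqP i N1) => h; [rewrite thr1 // | rewrite thr2 //]; lra.
Qed.

Lemma stream_index (s : {perm V}) x : index x (stream_of s) = index ((s^-1)%g x) (enum V).
Proof. by rewrite /stream_of -{1}(permKV s x) index_map //; exact: perm_inj. Qed.

Lemma stream_size (s : {perm V}) : size (stream_of s) = #|V|.
Proof. by rewrite size_map -cardE. Qed.

Lemma stream_nth (s : {perm V}) x e0 : nth e0 (stream_of s) (index x (stream_of s)) = x.
Proof.
apply: nth_index; rewrite -index_mem stream_index stream_size cardE index_mem.
by rewrite mem_enum.
Qed.

Lemma stream_lt (s : {perm V}) x : (index x (stream_of s) < #|V|)%N.
Proof. by rewrite -(stream_size s) index_mem -(index_mem x) stream_index stream_size cardE index_mem mem_enum. Qed.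

Lemma inP_iff (s : {perm V}) x : (x \in Pset N1 s) = (index x (stream_of s) < N1)%N.
Proof. by rewrite inE stream_index. Qed.


Lemma e5 : (10 : R) ^+ 5 = 100 * 1000.
Proof. by rewrite !exprS expr0; lra. Qed.

Lemma det (D O : {set V}) (s : {perm V}) :
  0 < o -> #|D|%:R <= 5 / 10 ^+ 5 * k%:R :> R ->
  13/32 * o <= f (D :&: Pset N1 s) ->
  (1/2 + 21/40/100) * o - f D <=
    f (((O :\: D) :&: ~: Pset N1 s) :|: D) - f D - tau2 * #|(O :\: D) :&: ~: Pset N1 s|%:R ->
  (1/2 + 25/10^+5) * o <= f (algorithm1 f k (stream_of s)).
Proof.
rewrite !e5.
set P := Pset N1 s; set Y := (O :\: D) :&: ~: P.
move=> opos hD hE1 hE2.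
have [kp [t2p t21]] := tau_facts.
set st := stream_of s.
have hDt : #|D|%:R * tau1 <= o / 200.
  have : #|D|%:R * tau1 <= 5/(100*1000) * k%:R * tau1 by apply: ler_wpM2r => //; lra.
  have -> : 5/(100*1000) * k%:R * tau1 = o/200 by field; apply/eqP; lra.
  done.
set s1 := take N1 st; set s2 := drop N1 st.
have hs1 : size s1 = N1.
  rewrite size_take stream_size; case: ltnP => // h; apply/eqP; by rewrite eqn_leq h N1_le.
set S1 := alg1_run f k #|V| o 1 set0 s1.
have eF : algorithm1 f k st = alg1_run f k #|V| o (1 + N1) S1 s2.
  by rewrite /algorithm1 -{1}(cat_take_drop N1 st) run_cat hs1.
have v1 : f set0 + tau1 * (#|S1|%:R - #|(set0 : {set V})|%:R) <= f S1.
  apply: run_val => j hj; rewrite hs1 in hj; rewrite thr1; first exact: lexx.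
  by rewrite add1n.
rewrite f0 cards0 subr0 add0r in v1.
have cS1 : (#|S1| <= k)%N by apply: run_card; rewrite cards0.
have fS1 : f S1 <= o := OPT_ge cS1.
have cS1r : #|S1|%:R * 100 <= k%:R :> R.
  have ek : k%:R * tau1 = 100 * o by field; apply/eqP; lra.
  move: v1 fS1 ek kp opos; set t1 := tau1; set x := (#|S1|%:R : R); set K := (k%:R : R).
  move=> v1 fS1 ek kp opos.
  have h1 : K * (t1 * x) <= K * o by rewrite ler_pM2l //; lra.
  have h2 : K * (t1 * x) = 100 * o * x by rewrite mulrA ek.
  nra.
have cS1k : (#|S1| < k)%N.
  by rewrite -(ltr_nat R); have : 0 <= #|S1|%:R :> R by []; lra.
have hS1D : f (D :&: P) <= f S1 + o / 200.
  have : f (S1 :|: (D :&: P)) <= f S1 + #|D :&: P|%:R * tau1.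
    apply: union_bound_c => // e; rewrite inE => /andP[eD eP].
    rewrite inP_iff in eP.
    have := @cover_final _ _ f fmono fsub k #|V| o 1 set0 s1 (index e st) e.
    rewrite hs1 thr1 ?add1n // nth_take // stream_nth => h.
    apply: h => //; lra.
  have : #|D :&: P|%:R * tau1 <= #|D|%:R * tau1.
    apply: ler_wpM2r; first lra.
    by rewrite ler_nat; apply: subset_leq_card; apply: subsetIl.
  have := fmono (subsetUr S1 (D :&: P)).
  lra.
set F := algorithm1 f k st.
have cF : (#|F| <= k)%N by rewrite /F /algorithm1; apply: run_card; rewrite cards0.
case: (ltnP #|F| k) => hF.
  have covF : forall e, fmarg f e F <= thrf (1 + index e st).
    move=> e; have := @cover_final _ _ f fmono fsub k #|V| o 1 set0 st (index e st) e.
    rewrite stream_nth => h; apply: h.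
    + have [h1 _] := thr_bounds (1 + index e st); lra.
    + by rewrite stream_size stream_lt.
    + exact: hF.
  have hX1 : f (F :|: D) <= f F + #|D|%:R * tau1.
    apply: union_bound_c => // e _; have [_ h2] := thr_bounds (1 + index e st); have := covF e; lra.
  have hX2 : f ((F :|: D) :|: Y) <= f (F :|: D) + #|Y|%:R * tau2.
    apply: union_bound_c => // e; rewrite /Y in_setI in_setC => /andP[_ eP].
    apply: le_trans (fmarg_DR fmono fsub e (subsetUl F D)) _.
    rewrite -(thr2 (i := 1 + index e st)); first exact: covF.
    by rewrite inP_iff -leqNgt in eP; rewrite add1n ltnS.
  have hm : f (Y :|: D) <= f ((F :|: D) :|: Y).
    apply: fmono; rewrite setUC -setUA; exact: subsetUr.
  rewrite mulrC in hX2.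
  lra.
have eFk : #|F| = k by apply/eqP; rewrite eqn_leq cF hF.
have v2 : f S1 + tau2 * (#|F|%:R - #|S1|%:R) <= f F.
  rewrite /F eF; apply: run_val => j _; have [h _] := thr_bounds (1 + N1 + j); exact: h.
rewrite eFk in v2.
have ek2 : k%:R * tau2 = o / 10 by field; apply/eqP; lra.
move: v2 ek2 cS1r t2p; set t2 := tau2; set x := (#|S1|%:R : R); set K := (k%:R : R).
move=> v2 ek2 cS1r t2p.
have : t2 * (99/100 * K) <= t2 * (K - x) by apply: ler_wpM2l => //; lra.
have e3 : t2 * (99/100 * K) = 99/100 * (K * t2) by ring.
rewrite e3 ek2 => h; lra.
Qed.


End Main.

Lemma E1_bound (R : realFieldType) (V : finType) (f : {set V} -> R) (N : nat) (D : {set V}) (o : R) :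
  monotone_set_fun f -> submodular f -> normalized f -> (N <= #|V|)%N ->
  0 < #|V|%:R :> R -> 899/1000 <= N%:R / #|V|%:R :> R -> 0 < o -> 99/200 * o <= f D ->
  2/5 * \sum_(s : {perm V}) (1:R) <= \sum_(s : {perm V} | 13/32 * o <= f (D :&: Pset N s)) 1.
Proof.
move=> fmono fsub f0 N1n npos qb opos Df.
set n := #|V| in npos qb N1n.
set a := f D in Df.
set Sall := \sum_(s : {perm V}) (1:R).
have Spos : 0 < Sall.
  rewrite /Sall (bigD1 1%g) //= ltr_pwDl //; exact: sumr_ge0.
pose E1 := fun s : {perm V} => 13/32 * o <= f (D :&: Pset N s).
have DRf : forall x (X Z : {set V}), X \subset Z -> f (x |: Z) - f Z <= f (x |: X) - f X.
  by move=> x X Z XZ; exact: (fmarg_DR fmono fsub x XZ).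
have hq1 : forall x : V, x \in D -> \sum_(s : {perm V} | true && (x \in Pset N s)) (1:R) =
    (N%:R / n%:R) * \sum_(s : {perm V} | true) 1.
  move=> x xD.
  have xn : x \notin (set0 : {set V}) by rewrite in_set0.
  have := count_in R (N1 := N) set0 N1n xn.
  rewrite setC0 cardsT cards0 subr0.
  have -> : \sum_(s : {perm V} | (set0 :&: Pset N s == set0) && (x \in Pset N s)) (1:R) =
     \sum_(s : {perm V} | true && (x \in Pset N s)) 1 by apply: eq_bigl => s; rewrite set0I eqxx.
  have -> : \sum_(s : {perm V} | set0 :&: Pset N s == set0) (1:R) = \sum_(s : {perm V} | true) 1
     by apply: eq_bigl => s; rewrite set0I eqxx.
  move=> h.
  set L := \sum_(s : {perm V} | true && _) _ in h *.
  have -> : L = (n%:R * L) / n%:R by field; apply/eqP; clear -npos; lra.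
  by rewrite h mulrAC.
have samp1 := sampling (A := fun _ => true) (Rs := Pset N) (g := f) (Q := D) f0 DRf hq1.
have mk := markov (A := fun _ => true) (B := fun s => ~~ E1 s) (h := fun s => a - f (D :&: Pset N s))
   (t := a - 13/32 * o).
have {mk} mk := mk (fun s _ => ltac:(rewrite subr_ge0; apply: fmono; exact: subsetIl))
  (fun s _ h => ltac:(move: h; rewrite /E1 -ltNge => h; clear -h; lra)).
rewrite sumrB in mk.
have eSa : \sum_(s : {perm V}) a = a * Sall by rewrite mulr_sumr; apply: eq_bigr => s _; rewrite mulr1.
rewrite eSa -/Sall -/a in mk samp1.
have eSplit : Sall = \sum_(s : {perm V} | E1 s) 1 + \sum_(s : {perm V} | true && ~~ E1 s) 1.
  by rewrite /Sall (bigID E1).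
move: eSplit mk samp1.
set SE1 := \sum_(s : {perm V} | E1 s) (1:R).
set X := \sum_(s : {perm V} | true && ~~ E1 s) (1:R).
set SF := \sum_(s : {perm V}) f (D :&: Pset N s).
set q := N%:R / n%:R.
move=> eSplit mk samp1.
have Sa0 : 0 <= a * Sall by apply: mulr_ge0; clear -Df opos Spos; lra.
have h1 : (1 - q) * (a * Sall) <= 101/1000 * (a * Sall).
  apply: ler_wpM2r => //; rewrite /q; clear -qb; lra.
have h2 : (a - 13/32 * o) * X <= 101/1000 * (a * Sall).
  have : q * Sall * a = q * (a * Sall) by ring.
  move: h1; rewrite mulrBl mul1r; clear -mk samp1; lra.
have h3 : 101/1000 * (a * Sall) <= (a - 13/32 * o) * (3/5 * Sall).
  have -> : (a - 13/32 * o) * (3/5 * Sall) = (3/5 * (a - 13/32 * o)) * Sall by ring.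
  rewrite mulrA; apply: ler_wpM2r; [clear -Spos; lra | clear -Df opos; lra].
have hX : X <= 3/5 * Sall.
  have hp : 0 < a - 13/32 * o by clear -Df opos; lra.
  by rewrite -(ler_pM2l hp); clear -h2 h3; lra.
clear -hX eSplit; lra.
Qed.

Lemma card_sum (R : realFieldType) (V : finType) (I : finType) (A : pred I) (Rs : I -> {set V}) (Q : {set V}) :
  \sum_(i | A i) (#|Q :&: Rs i|%:R : R) = \sum_(x in Q) \sum_(i | A i && (x \in Rs i)) 1.
Proof.
transitivity (\sum_(i | A i) \sum_(x in Q) (if x \in Rs i then (1:R) else 0)).
  apply: eq_bigr => i _; rewrite -sum1_card natr_sum -big_mkcondr.
  by apply: eq_bigl => x; rewrite in_setI.
rewrite exchange_big; apply: eq_bigr => x _.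
by rewrite sum_if mul1r.
Qed.

Lemma key_ineq (R : realFieldType) (q G W o a : R) :
  o - a <= G -> 0 <= W -> W <= o / 10 -> 9/100 <= q -> q <= 1 -> 99/200 * o <= a -> 0 < o ->
  (G - ((1/2 + 21/40/100) * o - a)) / 20 <= q * (G - W) - ((1/2 + 21/40/100) * o - a).
Proof.
move=> h1 h2 h3 h4 h5 h6 h7.
have p1 : 0 <= (q - 1/20) * (G - (o - a)) by apply: mulr_ge0; lra.
have p2 : 0 <= q * (o/10 - W) by apply: mulr_ge0; lra.
have p3 : 0 <= (1 - q) * (a - 99/200 * o) by apply: mulr_ge0; lra.
have p4 : 0 <= (q - 9/100) * o by apply: mulr_ge0; lra.
lra.
Qed.

Lemma T_bound (R : realFieldType) (V : finType) (f : {set V} -> R) (k N : nat) (D O T : {set V}) (o : R) :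
  monotone_set_fun f -> submodular f -> normalized f -> (N <= #|V|)%N ->
  0 < o -> 99/200 * o <= f D -> (#|O| <= k)%N -> f O = o -> 0 < k%:R :> R ->
  10 * N%:R <= 9 * #|V|%:R :> R -> #|D|%:R <= 5/(100*1000) * k%:R :> R -> k%:R <= #|V|%:R :> R ->
  1/20 * \sum_(s : {perm V} | D :&: Pset N s == T) (1:R) <=
  \sum_(s : {perm V} | (D :&: Pset N s == T) &&
      ((1/2 + 21/40/100) * o - f D <= f (((O :\: D) :&: ~: Pset N s) :|: D) - f D
          - o / (10 * k%:R) * #|(O :\: D) :&: ~: Pset N s|%:R)) 1.
Proof.
move=> fmono fsub f0 hN opos Df cO fO kp hN' hD hkn.
set A := fun s : {perm V} => D :&: Pset N s == T.
set tau2 := o / (10 * k%:R).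
set a := f D in Df *.
case: (pickP A) => [s0 hs0|none]; last first.
  rewrite big_pred0 // mulr0; exact: sumr_ge0.
have tT : (#|T| <= N)%N.
  move/eqP: hs0 => <-; apply: leq_trans (subset_leq_card (subsetIr D (Pset N s0))) _.
  by rewrite card_Pset.
have tT' : #|T|%:R <= N%:R :> R by rewrite ler_nat.
set Z := #|~: D|%:R : R.
have eZ : Z = #|V|%:R - #|D|%:R.
  by rewrite /Z -(cardsC D) natrD; ring.
have Zpos : 0 < Z by rewrite eZ; clear -hD hkn kp; lra.
set q := (Z - N%:R + #|T|%:R) / Z.
have qb1 : 9/100 <= q.
  rewrite ler_pdivlMr //; have : 0 <= #|T|%:R :> R by []. rewrite eZ. clear -hD hkn kp hN' eZ; lra.
have qb2 : q <= 1 by rewrite ler_pdivrMr // mul1r; clear -tT'; lra.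
set Q := O :\: D.
have hq2 : forall x, x \in Q -> \sum_(s : {perm V} | A s && (x \in ~: Pset N s)) (1:R) =
    q * \sum_(s : {perm V} | A s) 1.
  move=> x; rewrite inE => /andP[xD _].
  have := count_out R T hN xD.
  have -> : \sum_(s : {perm V} | (D :&: Pset N s == T) && (x \notin Pset N s)) (1:R) =
    \sum_(s : {perm V} | A s && (x \in ~: Pset N s)) 1 by apply: eq_bigl => s; rewrite in_setC.
  rewrite -/Z => h.
  set L := \sum_(s : {perm V} | A s && _) _ in h *.
  have -> : L = (Z * L) / Z by field; apply/eqP; clear -Zpos; lra.
  by rewrite h mulrAC.
pose g := fun X : {set V} => f (X :|: D) - f D.
have g0 : g set0 = 0 by rewrite /g set0U subrr.
have DRg : forall x (X Y : {set V}), X \subset Y -> g (x |: Y) - g Y <= g (x |: X) - g X.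
  move=> x X Y XY; rewrite /g -!setUA.
  have := fmarg_DR fmono fsub x (setSU D XY); rewrite /fmarg /fcond; lra.
have samp2 := sampling (A := A) (Rs := fun s => ~: Pset N s) (g := g) (Q := Q) g0 DRg hq2.
have lin : \sum_(s : {perm V} | A s) (#|Q :&: ~: Pset N s|%:R : R) = #|Q|%:R * (q * \sum_(s : {perm V} | A s) 1).
  rewrite card_sum (eq_bigr (fun _ => q * \sum_(s : {perm V} | A s) 1)); last by move=> x xQ; exact: hq2.
  by rewrite sumr_const mulr_natl.
pose Vp := fun s : {perm V} => g (Q :&: ~: Pset N s) - tau2 * #|Q :&: ~: Pset N s|%:R.
have GQ : forall s, Vp s <= g Q.
  move=> s; rewrite /Vp /g.
  have : f ((Q :&: ~: Pset N s) :|: D) <= f (Q :|: D) by apply: fmono; apply: setSU; exact: subsetIl.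
  have : 0 <= tau2 * #|Q :&: ~: Pset N s|%:R by apply: mulr_ge0 => //; apply: divr_ge0; clear -opos kp; lra.
  lra.
have rm := @rev_markov R _ A Vp (g Q) ((1/2 + 21/40/100) * o - a) (fun s _ => GQ s).
have eV : \sum_(s : {perm V} | A s) Vp s = \sum_(s : {perm V} | A s) g (Q :&: ~: Pset N s) - tau2 * (#|Q|%:R * (q * \sum_(s : {perm V} | A s) 1)).
  by rewrite -lin mulr_sumr -sumrB.
rewrite eV in rm.
have GQb : o - a <= g Q.
  rewrite /g -/a -fO; have : f O <= f (Q :|: D).
    apply: fmono; apply/subsetP => x xO; rewrite !inE xO; by case: (x \in D).
  lra.
have Wb : tau2 * #|Q|%:R <= o / 10.
  have : #|Q|%:R <= k%:R :> R.
    rewrite ler_nat; apply: leq_trans cO; apply: subset_leq_card; exact: subsetDl.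
  have e : tau2 * k%:R = o / 10 by rewrite /tau2; field; apply/eqP; clear -kp; lra.
  move=> h; rewrite -e; apply: ler_wpM2l => //; apply: divr_ge0; clear -opos kp; lra.
have W0 : 0 <= tau2 * #|Q|%:R by apply: mulr_ge0 => //; apply: divr_ge0; clear -opos kp; lra.
have K := key_ineq GQb W0 Wb qb1 qb2 Df opos.
move: rm samp2 K.
have -> : \sum_(s : {perm V} | A s && ((1/2 + 21/40/100) * o - a <= Vp s)) (1:R) =
  \sum_(s : {perm V} | (D :&: Pset N s == T) &&
      ((1/2 + 21/40/100) * o - a <= f (((O :\: D) :&: ~: Pset N s) :|: D) - f D - tau2 * #|(O :\: D) :&: ~: Pset N s|%:R)) 1.
  by apply: eq_bigl => s; rewrite /Vp /g.
set SE := \sum_(s : {perm V} | (D :&: Pset N s == T) && _) _.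
set SA := \sum_(s : {perm V} | A s) (1:R).
set G := g Q. set W := tau2 * #|Q|%:R.
set SG := \sum_(s : {perm V} | A s) g _.
move=> rm samp2 K.
have SA0 : 0 <= SA by apply: sumr_ge0.
have Gc : 0 < G - ((1/2 + 21/40/100) * o - a) by rewrite /G; clear -GQb Df opos; lra.
have h1 : (G - ((1/2 + 21/40/100) * o - a)) / 20 * SA <= (q * (G - W) - ((1/2 + 21/40/100) * o - a)) * SA
  by apply: ler_wpM2r.
have h2 : (q * (G - W) - ((1/2 + 21/40/100) * o - a)) * SA <= SG - tau2 * (#|Q|%:R * (q * SA)) - ((1/2 + 21/40/100) * o - a) * SA.
  have -> : tau2 * (#|Q|%:R * (q * SA)) = q * SA * W by rewrite /W; ring.
  have : q * SA * G <= SG by [].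
  move=> h; clear -h; nra.
rewrite -(ler_pM2l Gc).
have -> : (G - ((1/2 + 21/40/100) * o - a)) * (1 / 20 * SA) = (G - ((1/2 + 21/40/100) * o - a)) / 20 * SA by ring.
clear -h1 h2 rm; lra.
Qed.

Lemma part_T (R : realFieldType) (V : finType) (N : nat) (D : {set V}) (E : pred {set V}) (B : pred {perm V}) :
  \sum_(s | E (D :&: Pset N s) && B s) (1:R) =
  \sum_(T | E T) \sum_(s | (D :&: Pset N s == T) && B s) 1.
Proof.
rewrite (partition_big (fun s => D :&: Pset N s) E); last by move=> s /andP[].
apply: eq_bigr => T ET; apply: eq_bigl => s.
case: eqP => [e|_]; last by rewrite !andbF.
by rewrite -e in ET; rewrite ET andbT.
Qed.



Unset Implicit Arguments. Set Strict Implicit.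

Theorem mainTheorem5 (R : realFieldType) (V : finType) (f : {set V} -> R) (k : nat) :
  nonneg_set_fun f -> monotone_set_fun f -> submodular f -> normalized f ->
  (0 < k)%N -> (k <= #|V|)%N ->
  (2 * 10 ^+ 8 : R) <= k%:R ->
  (exists D : {set V}, dense f k D) ->
  (1 / 100 : R) <=
    #|[set sigma : {perm V} |
        (1 / 2 + 25 / 10 ^+ 5) * OPT f k <= f (algorithm1 f k (stream_of sigma))]|%:R
    / #|{: {perm V}}|%:R.
Proof.
move=> fnn fmono fsub f0 k0 kn k8 [D [Dc Df]].
set good := fun s : {perm V} => (1 / 2 + 25 / 10 ^+ 5) * OPT f k <= f (algorithm1 f k (stream_of s)).
have eG : #|[set s | good s]|%:R = \sum_(s | good s) (1:R).
  by rewrite -sum1_card natr_sum; apply: eq_bigl => s; rewrite inE.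
have eS : #|{: {perm V}}|%:R = \sum_(s : {perm V}) (1:R) by rewrite -sum1_card natr_sum.
rewrite eG eS.
set Sall := \sum_(s : {perm V}) (1:R).
have Spos : 0 < Sall.
  rewrite /Sall (bigD1 1%g) //= ltr_pwDl //; exact: sumr_ge0.
rewrite ler_pdivlMr //.
have o0 := OPT_ge0 k f0.
set o := OPT f k in o0 good eG *.
have [oz|opos] := eqVneq o 0.
  have -> : \sum_(s | good s) (1:R) = Sall.
    by apply: eq_bigl => s; rewrite /good oz mulr0 fnn.
  lra.
have {opos} opos : 0 < o by rewrite lt_def opos o0.
rewrite -/o in Df.
move: Dc Df; rewrite /Defs.eta /gamma e5 => Dc Df.
have e8 : (10:R) ^+ 8 = 100 * 1000 * 1000 by rewrite !exprS expr0; lra.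
rewrite e8 in k8.
set a := f D in Df *.
set n := #|V|.
have kn' : k%:R <= n%:R :> R by rewrite ler_nat.
have [O [cO fO]] := OPT_attained k fnn; rewrite -/o in fO.
have cDk : (#|D| <= k)%N by rewrite -(ler_nat R); lra.
have ao : a <= o by exact: OPT_ge.
have [kp [t2p t21]] := tau_facts f0 k0; rewrite -/o in t2p t21.
have [nb1 nb2] := N1_bounds k0 kn.
have nb1' : 10 * (N1 V)%:R <= 9 * n%:R :> R by rewrite -(natrM R 10) -(natrM R 9) ler_nat.
have nb2' : 9 * n%:R <= 10 * (N1 V)%:R + 9 :> R.
  by rewrite -(natrM R 10) -(natrM R 9) -(natrD R) ler_nat; rewrite -ltnS; move: nb2; rewrite addnS.
have N1n := N1_le k0 kn.
pose E1 := fun s : {perm V} => 13/32 * o <= f (D :&: Pset (N1 V) s).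
pose tau2 := o / (10 * k%:R).
pose Y := fun s : {perm V} => (O :\: D) :&: ~: Pset (N1 V) s.
pose Vp := fun s : {perm V} => f (Y s :|: D) - f D - tau2 * #|Y s|%:R.
pose c := (1/2 + 21/40/100) * o - a.
pose E2 := fun s => c <= Vp s.
have hgood : \sum_(s | E1 s && E2 s) (1:R) <= \sum_(s | good s) 1.
  rewrite big_mkcond [X in _ <= X]big_mkcond /=; apply: ler_sum => s _.
  case: (boolP (E1 s && E2 s)) => [/andP[h1 h2]|_]; last by case: ifP.
  suff -> : good s by [].
  apply: (det fmono fsub f0 k0 kn (D := D) (O := O)) => //.
  by rewrite e5.
have npos : 0 < n%:R :> R by clear -k8 kn'; lra.
have qb : 899/1000 <= (N1 V)%:R / n%:R :> R.
  rewrite ler_pdivlMr //; clear -nb2' k8 kn'; lra.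
have Df' : 99/200 * o <= a by clear -Df; lra.
have hE1 := E1_bound fmono fsub f0 N1n npos qb opos Df'.
have hT := fun T => @T_bound R V f k (N1 V) D O T o fmono fsub f0 N1n opos Df' cO fO kp nb1' Dc kn'.
have p1 := part_T R (N1 V) D (fun T => 13/32 * o <= f T) E2.
have p2 := part_T R (N1 V) D (fun T => 13/32 * o <= f T) (fun _ => true).
have h3 : \sum_(T | 13/32 * o <= f T) (1/20 * \sum_(s : {perm V} | D :&: Pset (N1 V) s == T) (1:R)) <=
    \sum_(T | 13/32 * o <= f T) \sum_(s : {perm V} | (D :&: Pset (N1 V) s == T) && E2 s) (1:R).
  by apply: ler_sum => T _; exact: hT.
rewrite -mulr_sumr in h3.
have e2 : \sum_(T | 13/32 * o <= f T) \sum_(s : {perm V} | (D :&: Pset (N1 V) s == T)) (1:R) =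
   \sum_(T | 13/32 * o <= f T) \sum_(s : {perm V} | (D :&: Pset (N1 V) s == T) && true) (1:R).
  by apply: eq_bigr => T _; apply: eq_bigl => s; rewrite andbT.
have e3 : \sum_(s : {perm V} | (13/32 * o <= f (D :&: Pset (N1 V) s)) && true) (1:R) =
   \sum_(s : {perm V} | 13/32 * o <= f (D :&: Pset (N1 V) s)) 1.
  by apply: eq_bigl => s; rewrite andbT.
rewrite e2 -p2 e3 -p1 in h3.
move: hgood h3 hE1 Spos.
set SG := \sum_(s | good s) _.
set S12 := \sum_(s : {perm V} | E1 s && E2 s) _.
set S1 := \sum_(s : {perm V} | 13/32 * o <= _) _.
move=> hgood h3 hE1 Spos.
have hE1' : 2/5 * Sall <= S1 by exact: hE1.
clear -hgood h3 hE1' Spos; lra.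
Qed.
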